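(* Let $T\ge 1$ and $t\ge 1$ be integers and let $g_{T,t}:\mathbb{R}^{Tt}\to\mathbb{R}$ be the function defined in the context. Then: (1) the function $\mathbf{x}\mapsto g_{T,t}(\mathbf{y}-\mathbf{x})$ is a zero-chain; (2) $\mathbf{0}$ is a minimizer of $g_{T,t}$, $\inf_{\mathbf{x}} g_{T,t}(\mathbf{x}) = 0$, and $g_{T,t}(\mathbf{x})\le \frac12\mathbf{x}^\top(\mathbf{B}+\mathbf{I})\mathbf{x}$ for all $\mathbf{x}\in\mathbb{R}^{Tt}$; (3) $g_{T,t}$ is $37$-smooth; (4) there is a universal constant $C_3>0$ (independent of $T$ and $t$) such that $g_{T,t}$ satisfies the $\frac{1}{C_3T}$-PL condition.
   Context: A differentiable $f:\mathbb{R}^d\to\mathbb{R}$ is $L$-smooth if $\|\nabla f(\mathbf{x})-\nabla f(\mathbf{z})\|\le L\|\mathbf{x}-\mathbf{z}\|$ for all $\mathbf{x},\mathbf{z}$. It satisfies the $\mu$-PL condition ($\mu>0$) if $\|\nabla f(\mathbf{x})\|^2\ge 2\mu\,(f(\mathbf{x})-\inf_{\mathbf{z}} f(\mathbf{z}))$ for all $\mathbf{x}$. For $\mathbf{x}\in\mathbb{R}^d$, $\mathrm{supp}(\mathbf{x})=\{i:\mathbf{x}_i\neq 0\}$. A differentiable $f:\mathbb{R}^d\to\mathbb{R}$ is a zero-chain if for every $\mathbf{x}$ and every $k\in\{0,1,\dots,d\}$, $\mathrm{supp}(\mathbf{x})\subseteq\{1,\dots,k\}$ implies $\mathrm{supp}(\nabla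 f(\mathbf{x}))\subseteq\{1,\dots,k+1\}$. Construction. For a constant $y>0$ define $v_y:\mathbb{R}\to\mathbb{R}$ by $v_y(x)=\frac12x^2$ if $x\le\frac{31}{32}y$; $v_y(x)=\frac12x^2-16(x-\frac{31}{32}y)^2$ if $\frac{31}{32}y<x\le y$; $v_y(x)=\frac12x^2-\frac{y^2}{32}+16(x-\frac{33}{32}y)^2$ if $y<x\le\frac{33}{32}y$; $v_y(x)=\frac12x^2-\frac{y^2}{32}$ if $x>\frac{33}{32}y$. For $\mathbf{x}\in\mathbb{R}^{Tt}$, with the convention $\mathbf{x}_0=0$, let $$q_{T,t}(\mathbf{x})=\frac12\sum_{i=0}^{t-1}\Big[\big(\tfrac78\mathbf{x}_{iT}-\mathbf{x}_{iT+1}\big)^2+\sum_{j=1}^{T-1}(\mathbf{x}_{iT+j+1}-\mathbf{x}_{iT+j})^2\Big],$$ and let $\mathbf{B}$ be the symmetric positive semidefinite $Tt\times Tt$ matrix with $q_{T,t}(\mathbf{x})=\frac12\mathbf{x}^\top\mathbf{B}\mathbf{x}$. Let $\mathbf{y}\in\mathbb{R}^{Tt}$ be given by $\mathbf{y}_{qT+b}=(7/8)^q$ for $q\in\{0,\dots,t-1\}$, $b\in\{1,\dots,T\}$. Define $g_{T,t}(\mathbf{x})=q_{T,t}(\mathbf{x})+\sum_{i=1}^{Tt}v_{\mathbf{y}_i}(\mathbf{x}_i)$. *)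

(* Defs.v *)
(* R : realType, vectors in R^d are row vectors 'rV[R]_d,
   coordinates are 0-based (paper index p corresponds to ordinal p-1). *)
From HB Require Import structures.
From mathcomp Require Import all_boot all_order all_algebra.
From mathcomp Require Import all_classical all_reals all_analysis.
Set Implicit Arguments. Unset Strict Implicit. Unset Printing Implicit Defensive.
Import Order.TTheory GRing.Theory Num.Theory.
Import numFieldNormedType.Exports.
Local Open Scope classical_set_scope.
Local Open Scope ring_scope.

Section Defs.
Variable R : realType.

(* Euclidean norm on R^d (the library's norm on 'rV is the sup norm). *)
Definition enorm (d : nat) (x : 'rV[R]_d) : R :=
  Num.sqrt (\sum_(i < d) x 0 i ^+ 2).

Definition grad (d : nat) (f : 'rV[R]_d -> R) (x : 'rV[R]_d) : 'rV[R]_d :=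
  \row_(i < d) ('d f x (delta_mx 0 i : 'rV[R]_d)).

Definition diffble (d : nat) (f : 'rV[R]_d -> R) : Prop :=
  forall x : 'rV[R]_d, differentiable f x.

Definition L_smooth (d : nat) (f : 'rV[R]_d -> R) (L : R) : Prop :=
  diffble f /\
  forall x z : 'rV[R]_d, enorm (grad f x - grad f z) <= L * enorm (x - z).

Definition PL (d : nat) (f : 'rV[R]_d -> R) (mu : R) : Prop :=
  diffble f /\
  forall x : 'rV[R]_d,
    enorm (grad f x) ^+ 2 >= 2 * mu * (f x - inf (range f)).

(* zero-chain; supp(x) ⊆ {1..k} (1-based) means: x_i <> 0 -> i < k (0-based). *)
Definition zero_chain (d : nat) (f : 'rV[R]_d -> R) : Prop :=
  diffble f /\
  forall (x : 'rV[R]_d) (k : nat), (k <= d)%N ->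
    (forall i : 'I_d, x 0 i != 0 -> (i < k)%N) ->
    (forall i : 'I_d, grad f x 0 i != 0 -> (i < k.+1)%N).

Definition v_fun (y x : R) : R :=
  if x <= 31/32 * y then x ^+ 2 / 2
  else if x <= y then x ^+ 2 / 2 - 16 * (x - 31/32 * y) ^+ 2
  else if x <= 33/32 * y then x ^+ 2 / 2 - y ^+ 2 / 32 + 16 * (x - 33/32 * y) ^+ 2
  else x ^+ 2 / 2 - y ^+ 2 / 32.

(* paper coordinate x_p (1-based), with the convention x_0 = 0 *)
Definition pc (d : nat) (x : 'rV[R]_d) (p : nat) : R :=
  match p with
  | 0 => 0
  | p'.+1 => match insub p' with Some i => x 0 i | None => 0 end
  end.

Definition q_fun (T t : nat) (x : 'rV[R]_(T * t)) : R :=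
  1/2 * \sum_(i < t)
    ((7/8 * pc x (i * T) - pc x (i * T + 1)) ^+ 2
     + \sum_(1 <= j < T) (pc x (i * T + j + 1) - pc x (i * T + j)) ^+ 2).

(* B: the unique symmetric matrix with q(x) = 1/2 x^T B x (polarization). *)
Definition Bmat (T t : nat) : 'M[R]_(T * t) :=
  \matrix_(i, j) (@q_fun T t (delta_mx 0 i + delta_mx 0 j)
                  - @q_fun T t (delta_mx 0 i) - @q_fun T t (delta_mx 0 j)).

(* y_{qT+b} = (7/8)^q, b in 1..T; 0-based index k = qT+b-1, so q = k %/ T. *)
Definition yvec (T t : nat) : 'rV[R]_(T * t) :=
  \row_(k < T * t) (7/8 : R) ^+ (k %/ T).

Definition g_fun (T t : nat) (x : 'rV[R]_(T * t)) : R :=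
  @q_fun T t x + \sum_(i < T * t) v_fun (@yvec T t 0 i) (x 0 i).

End Defs.

(* Main.v *)
From HB Require Import structures.
From mathcomp Require Import all_boot all_order all_algebra.
From mathcomp Require Import all_classical all_reals all_analysis.
From mathcomp Require Import ring lra.
Require Import Defs.
Import Order.TTheory GRing.Theory Num.Theory.
Import numFieldNormedType.Exports.
Local Open Scope classical_set_scope.
Local Open Scope ring_scope.
Set Implicit Arguments. Unset Strict Implicit. Unset Printing Implicit Defensive.

Section Gen.
Variable R : realType.

Definition linc d (c : 'rV[R]_d) (h : 'rV[R]_d) : R := \sum_(i < d) c 0 i * h 0 i.

Lemma linc_is_linear d (c : 'rV[R]_d) : linear (linc c).
Proof.
move=> a u v; rewrite /linc scaler_sumr -big_split /=; apply: eq_bigr => i _.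
by rewrite !mxE mulrDr mulrCA.
Qed.

HB.instance Definition _ d (c : 'rV[R]_d) :=
  GRing.isLinear.Build R 'rV[R]_d R *:%R (linc c) (linc_is_linear c).

Lemma coord_le_norm d (h : 'rV[R]_d) i : `|h 0 i| <= `|h|.
Proof.
have /mapP[j Hj ->] : `|h 0 i| \in [seq `|h x.1 x.2| | x : 'I_1 * 'I_d].
  by apply/mapP; exists (0, i) => //=; rewrite mem_enum.
by rewrite [leRHS]/Num.norm /= mx_normrE; apply/bigmax_geP; right => /=; exists j.
Qed.

Lemma linc_bound d (c h : 'rV[R]_d) : `|linc c h| <= (\sum_i `|c 0 i|) * `|h|.
Proof.
rewrite /linc mulr_suml; apply: le_trans (ler_norm_sum _ _ _) _.
apply: ler_sum => i _; rewrite normrM ler_wpM2l //; exact: coord_le_norm.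
Qed.

Lemma linc_cont d (c : 'rV[R]_d) : continuous (linc c).
Proof.
apply/(@linear_bounded_continuous R _ _ (linc c)).
apply/linear_boundedP; near=> r => h.
apply: le_trans (linc_bound c h) _; apply: ler_wpM2r => //.
Unshelve. all: by end_near. Qed.

Lemma quad_diff d (f : 'rV[R]_d -> R) x (c : 'rV[R]_d) K :
  (forall h, `|f (x + h) - f x - linc c h| <= K * `|h| ^+ 2) ->
  differentiable f x /\ 'd f x = linc c :> (_ -> _).
Proof.
move=> H.
have e : f \o shift x = cst (f x) + linc c +o_ (nbhs (0 : 'rV[R]_d)) id.
  apply/eqaddoP => eps eps0.
  have K1 : 0 < `|K| + 1 by rewrite ltr_wpDl.
  near=> h; rewrite /= !fctE.
  have -> : f (h + x) - (f x + linc c h) = f (x + h) - f x - linc c h.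
    by rewrite [h + x]addrC opprD addrA.
  apply: le_trans (H h) _.
  have hs : `|h| <= eps / (`|K| + 1).
    by near: h; change (\forall x0 \near (0 : 'rV[R]_d), `|x0| <= eps / (`|K| + 1)); apply: nbhs0_le; rewrite divr_gt0.
  rewrite expr2 mulrA ler_wpM2r //.
  apply: (@le_trans _ _ (`|K| * `|h|)); first by rewrite ler_wpM2r // ler_norm.
  apply: le_trans (ler_wpM2l (normr_ge0 K) hs) _.
  rewrite mulrA ler_pdivrMr //.
  have := normr_ge0 K; nra.
have dfe := diff_unique (@linc_cont d c) e.
split; last exact: dfe.
apply/diff_locallyP; rewrite dfe; split => //; exact: (@linc_cont d c).
Unshelve. all: by end_near. Qed.
End Gen.

Ltac norm_hyps :=
  repeat match goal with
  | H : (?a <= ?b) = false |- _ => move/negbT: H; rewrite -ltNge => H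
  end.
Ltac split_ifs :=
  repeat match goal with |- context [if ?c then _ else _] => case: ifP => ? end;
  norm_hyps.

Section V1.
Variable R : realType.
Implicit Types y x z h : R.

Definition mp x : R := if x <= 0 then 0 else x.
Definition dv y x : R :=
  if x <= 31/32 * y then x
  else if x <= y then x - 32 * (x - 31/32 * y)
  else if x <= 33/32 * y then x + 32 * (x - 33/32 * y)
  else x.

Lemma v_sform y x : 0 < y ->
  v_fun y x = x ^+ 2 / 2 - 16 * mp (x - 31/32 * y) ^+ 2 + 32 * mp (x - y) ^+ 2
              - 16 * mp (x - 33/32 * y) ^+ 2.
Proof. move=> y0; rewrite /v_fun /mp; split_ifs; try lra; nra. Qed.

Lemma dv_mform y x : 0 < y ->
  dv y x = x - 32 * mp (x - 31/32 * y) + 64 * mp (x - y) - 32 * mp (x - 33/32 * y).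
Proof. move=> y0; rewrite /dv /mp; split_ifs; lra. Qed.

Lemma sq_rem z h : `| mp (z + h) ^+ 2 - mp z ^+ 2 - 2 * mp z * h | <= h ^+ 2.
Proof.
rewrite /mp; split_ifs; rewrite ler_norml; apply/andP; split; nra.
Qed.

Lemma v_rem y x h : 0 < y ->
  `| v_fun y (x + h) - v_fun y x - dv y x * h | <= 65 * h ^+ 2.
Proof.
move=> y0; rewrite !v_sform // dv_mform //.
have e1 := sq_rem (x - 31/32 * y) h.
have e2 := sq_rem (x - y) h.
have e3 := sq_rem (x - 33/32 * y) h.
rewrite (addrAC x (- (31/32*y)) h) in e1.
rewrite (addrAC x (- y) h) in e2.
rewrite (addrAC x (- (33/32*y)) h) in e3.
move: e1 e2 e3; rewrite !ler_norml => /andP[a1 b1] /andP[a2 b2] /andP[a3 b3].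
apply/andP; split; lra.
Qed.

Lemma dv_lip y x z : 0 < y -> `| dv y x - dv y z | <= 33 * `| x - z |.
Proof.
move=> y0; have h1 := ler_norm (x - z).
have h2 : z - x <= `|x - z| by rewrite -normrN opprB ler_norm.
rewrite /dv; split_ifs; rewrite ler_norml; apply/andP; split; lra.
Qed.

Lemma v_ge0 y x : 0 < y -> 7/16 * x ^+ 2 <= v_fun y x.
Proof.
move=> y0; rewrite /v_fun.
case: ifP => h1; first nra. norm_hyps.
case: ifP => h2.
  have e1 : 0 <= x - 31/32 * y by lra.
  have e2 : x - 31/32 * y <= x / 31 by lra.
  have e3 : (x - 31/32 * y) ^+ 2 <= (x / 31) ^+ 2.
    by rewrite !expr2; nra.
  nra.
norm_hyps; have e : y * y <= x * x by nra.
case: ifP => h3; nra.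
Qed.

Lemma v_le y x : 0 < y -> v_fun y x <= x ^+ 2 / 2.
Proof.
move=> y0; rewrite /v_fun.
case: ifP => h1; first lra. norm_hyps.
case: ifP => h2; first by have := sqr_ge0 (x - 31/32 * y); lra. norm_hyps.
case: ifP => h3; last nra. norm_hyps.
have e1 : 0 <= 33/32 * y - x by lra.
have e2 : 33/32 * y - x <= y / 32 by lra.
have e3 : (x - 33/32 * y) ^+ 2 <= (y / 32) ^+ 2.
  by rewrite -sqrrN opprB !expr2; nra.
nra.
Qed.

Lemma v_0 y : 0 < y -> v_fun y 0 = 0.
Proof. move=> y0; rewrite /v_fun; split_ifs; lra. Qed.

Lemma dv_yy y : 0 < y -> dv y y = 0.
Proof. move=> y0; rewrite /dv; split_ifs; lra. Qed.

Definition inS y x := (31/32 * y < x) && (x < 33/32 * y).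

Lemma dv_notS y x : 0 < y -> ~~ inS y x -> dv y x = x.
Proof. move=> y0; rewrite /inS /dv negb_and -!leNgt => /orP[]?; split_ifs; lra. Qed.

Lemma dv_S y x : 0 < y -> inS y x -> 0 <= dv y x.
Proof. move=> y0; rewrite /inS /dv => /andP[??]; split_ifs; lra. Qed.

Lemma v_PLbound y x : 0 < y ->
  v_fun y x <= x * dv y x / 2 + (if inS y x then y ^+ 2 else 0).
Proof.
move=> y0; case: ifP => hS.
  have := dv_S y0 hS; move: hS; rewrite /inS => /andP[??] hd.
  have := @v_le y x y0; nra.
rewrite dv_notS ?hS //; have := @v_le y x y0; lra.
Qed.
End V1.

Section C.
Variable R : realType.

Section PC.
Variable n : nat.
Implicit Types x h z : 'rV[R]_n.

Lemma pc0 x : pc x 0 = 0. Proof. by []. Qed.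

Lemma pcS x (i : 'I_n) : pc x i.+1 = x 0 i.
Proof. by rewrite /pc valK. Qed.

Lemma pc_ge x p : (n <= p)%N -> pc x p.+1 = 0.
Proof. by move=> h; rewrite /pc insubF // ltnNge h. Qed.

Lemma pc_lin (a : R) x z p : pc (a *: x + z) p = a * pc x p + pc z p.
Proof.
case: p => [|p] /=; first by rewrite mulr0 addr0.
by case: insubP => [i _ _|_]; rewrite ?mxE ?mulr0 ?addr0.
Qed.

Lemma pc_add x z p : pc (x + z) p = pc x p + pc z p.
Proof. by rewrite -[x]scale1r pc_lin mul1r scale1r. Qed.


Lemma pc_zero p : pc (0 : 'rV[R]_n) p = 0.
Proof. by case: p => [|p] //=; case: insubP => [i _ _|_]; rewrite ?mxE. Qed.

Lemma pc_opp x p : pc (- x) p = - pc x p.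
Proof. by have := pc_lin (-1) x 0 p; rewrite scaleN1r addr0 pc_zero addr0 mulN1r. Qed.

Lemma pc_norm x p : `|pc x p| <= `|x|.
Proof.
case: p => [|p] /=; first by rewrite normr0.
by case: insubP => [i _ _|_]; [exact: coord_le_norm | rewrite normr0].
Qed.

Lemma pc_delta (j : 'I_n) p : pc (delta_mx 0 j : 'rV[R]_n) p = (p == j.+1)%:R.
Proof.
case: p => [|p] //=; case: insubP => [i _ <-|]; rewrite ?mxE /=.
  by rewrite eqSS.
by rewrite eqSS; case: eqP => // ->; rewrite ltn_ord.
Qed.

End PC.

Lemma sum_blocks (F : nat -> R) (T t : nat) :
  \sum_(k < T * t) F k = \sum_(i < t) \sum_(j < T) F (i * T + j)%N.
Proof.
elim: t => [|t IH]; first by rewrite muln0 !big_ord0.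
rewrite big_ord_recr /= -IH mulnS addnC big_split_ord /=.
by congr (_ + _); apply: eq_bigr => j _; rewrite mulnC.
Qed.

Lemma sum_shift (F : nat -> R) (n : nat) : F 0%N = 0 ->
  \sum_(k < n) F k = \sum_(k < n) (if (k.+1 < n)%N then F k.+1 else 0).
Proof.
move=> F0; case: n => [|n]; first by rewrite !big_ord0.
rewrite big_ord_recl F0 add0r big_ord_recr /= ltnn addr0.
by apply: eq_bigr => i _; rewrite ltnS ltn_ord.
Qed.

End C.

Section D.
Variable R : realType.
Variables T t : nat.
Local Notation n := (T * t)%N.
Implicit Types x h z : 'rV[R]_n.

Definition alpha (k : nat) : R := if (k %% T == 0)%N then 7/8 else 1.
Definition rr x k := pc x k.+1 - alpha k * pc x k.

Lemma alpha_ge k : 7/8 <= alpha k. Proof. rewrite /alpha; case: ifP => _; lra. Qed.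
Lemma alpha_le k : alpha k <= 1. Proof. rewrite /alpha; case: ifP => _; lra. Qed.

Lemma qE x : (0 < T)%N -> q_fun x = 1/2 * \sum_(k < n) rr x k ^+ 2.
Proof.
move=> hT; rewrite /q_fun (sum_blocks (fun k => rr x k ^+ 2)); congr (_ * _); apply: eq_bigr => i _.
rewrite -(big_mkord xpredT (fun j => rr x (i * T + j) ^+ 2)) big_ltn //= addn0.
congr (_ + _).
  rewrite /rr /alpha modnMl eqxx addn1.
  by rewrite -sqrrN opprB.
apply: eq_big_nat => j /andP[j1 jT].
rewrite /rr /alpha.
have -> : ((i * T + j) %% T = j)%N by rewrite modnMDl modn_small.
have -> : (j == 0)%N = false by case: j j1 {jT}.
by rewrite mul1r !addn1.
Qed.

Definition Gq x : 'rV[R]_n :=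
  \row_(i < n) (rr x i - (if (i.+1 < n)%N then alpha i.+1 * rr x i.+1 else 0)).
Definition Gv x : 'rV[R]_n := \row_(i < n) dv (yvec R T t 0 i) (x 0 i).
Definition G x := Gq x + Gv x.

Lemma linc_Gq x h : linc (Gq x) h = \sum_(k < n) rr x k * rr h k.
Proof.
have e1 : \sum_(k < n) rr x k * rr h k =
  \sum_(k < n) rr x k * pc h k.+1 - \sum_(k < n) rr x k * (alpha k * pc h k).
  by rewrite -sumrB; apply: eq_bigr => k _; rewrite /rr mulrBr.
rewrite e1 (sum_shift (F := fun k : nat => rr x k * (alpha k * pc h k))); last first.
  by rewrite pc0 !mulr0.
rewrite /linc -sumrB; apply: eq_bigr => k _.
rewrite mxE -pcS mulrBl; congr (_ - _).
by case: ifP => _; rewrite ?mul0r // mulrA [rr x _ * _]mulrC.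
Qed.

Lemma linc_addc d (c1 c2 h : 'rV[R]_d) : linc (c1 + c2) h = linc c1 h + linc c2 h.
Proof. by rewrite /linc -big_split; apply: eq_bigr => i _; rewrite mxE mulrDl. Qed.

Lemma linc_delta d (c : 'rV[R]_d) (i : 'I_d) : linc c (delta_mx 0 i) = c 0 i.
Proof.
rewrite /linc (bigD1 i) //= big1 => [|j /negbTE ji]; rewrite mxE.
  by rewrite !eqxx mulr1 addr0.
by rewrite ji andbF mulr0.
Qed.

Lemma rr_add x h k : rr (x + h) k = rr x k + rr h k.
Proof. by rewrite /rr !pc_add; ring. Qed.

Lemma rr_norm h k : `|rr h k| <= 2 * `|h|.
Proof.
rewrite /rr; apply: le_trans (ler_normB _ _) _.
rewrite normrM (ger0_norm (le_trans _ (alpha_ge k))); last lra.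
have := pc_norm h k.+1; have := pc_norm h k; have := alpha_le k; have := alpha_ge k.
have := normr_ge0 (pc h k); nra.
Qed.

Lemma sq_coord d (h : 'rV[R]_d) i : h 0 i ^+ 2 <= `|h| ^+ 2.
Proof.
rewrite -(real_normK (num_real (h 0 i))).
have := coord_le_norm h i; have := normr_ge0 (h 0 i); nra.
Qed.

Lemma rr_sq h k : `|rr h k| ^+ 2 <= 4 * `|h| ^+ 2.
Proof. have := rr_norm h k; have := normr_ge0 (rr h k); have := normr_ge0 h; nra. Qed.

Lemma yvec_gt0 (i : 'I_n) : 0 < yvec R T t 0 i.
Proof. by rewrite mxE exprn_gt0. Qed.

Lemma g_rem x h : (0 < T)%N ->
  `|g_fun (x + h) - g_fun x - linc (G x) h| <= (67 * n%:R) * `|h| ^+ 2.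
Proof.
move=> hT.
have eq1 : q_fun (x + h) - q_fun x - linc (Gq x) h = 1/2 * \sum_(k < n) rr h k ^+ 2.
  rewrite !qE // linc_Gq !mulr_sumr -!sumrB; apply: eq_bigr => k _.
  rewrite rr_add; move: (rr x k) (rr h k) => a b; by field.
have eq2 : \sum_(i < n) v_fun (yvec R T t 0 i) ((x + h) 0 i)
    - \sum_(i < n) v_fun (yvec R T t 0 i) (x 0 i) - linc (Gv x) h =
  \sum_(i < n) (v_fun (yvec R T t 0 i) (x 0 i + h 0 i) - v_fun (yvec R T t 0 i) (x 0 i)
     - dv (yvec R T t 0 i) (x 0 i) * h 0 i).
  by rewrite /linc -!sumrB; apply: eq_bigr => i _; rewrite !mxE.
have E : g_fun (x + h) - g_fun x - linc (G x) h =
  (q_fun (x + h) - q_fun x - linc (Gq x) h) +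
  (\sum_(i < n) v_fun (yvec R T t 0 i) ((x + h) 0 i)
    - \sum_(i < n) v_fun (yvec R T t 0 i) (x 0 i) - linc (Gv x) h).
  by rewrite /g_fun /G linc_addc; ring.
rewrite E eq1 eq2; apply: le_trans (ler_normD _ _) _.
have b1 : `|1/2 * \sum_(k < n) rr h k ^+ 2| <= 1/2 * ((4 * `|h| ^+ 2) *+ n).
  rewrite normrM ger0_norm; last lra.
  apply: ler_wpM2l; first lra.
  have -> : (4 * `|h| ^+ 2) *+ n = \sum_(k < n) (4 * `|h| ^+ 2).
    by rewrite sumr_const card_ord.
  apply: le_trans (ler_norm_sum _ _ _) _; apply: ler_sum => k _.
  by rewrite normrX rr_sq.
have b2 : `|\sum_(i < n) (v_fun (yvec R T t 0 i) (x 0 i + h 0 i) - v_fun (yvec R T t 0 i) (x 0 i)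
     - dv (yvec R T t 0 i) (x 0 i) * h 0 i)| <= (65 * `|h| ^+ 2) *+ n.
  have -> : (65 * `|h| ^+ 2) *+ n = \sum_(i < n) (65 * `|h| ^+ 2).
    by rewrite sumr_const card_ord.
  apply: le_trans (ler_norm_sum _ _ _) _; apply: ler_sum => i _.
  apply: le_trans (v_rem _ _ (yvec_gt0 i)) _.
  by rewrite ler_wpM2l // sq_coord.
apply: le_trans (lerD b1 b2) _.
rewrite -(mulr_natr (4 * _)) -(mulr_natr (65 * _)); move: (`|h| ^+ 2) (n%:R) => u m; lra.
Qed.

Lemma g_diff x : (0 < T)%N ->
  differentiable (@g_fun R T t) x /\ 'd (@g_fun R T t) x = linc (G x) :> (_ -> _).
Proof. by move=> hT; apply: (quad_diff (K := 67 * n%:R)) => h; exact: g_rem. Qed.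

Lemma grad_g x : (0 < T)%N -> grad (@g_fun R T t) x = G x.
Proof.
move=> hT; apply/rowP => i; rewrite mxE.
by have [_ ->] := g_diff x hT; rewrite linc_delta.
Qed.

End D.

Section E.
Variable R : realType.
Variables T t : nat.
Hypothesis hT : (0 < T)%N.
Local Notation n := (T * t)%N.
Implicit Types x h z : 'rV[R]_n.

Lemma rr_zero k : rr (0 : 'rV[R]_n) k = 0.
Proof. by rewrite /rr !pc_zero mulr0 subr0. Qed.

Lemma rr_scale a x k : rr (a *: x) k = a * rr x k.
Proof. by rewrite /rr -[a *: x]addr0 !pc_lin !pc_zero !addr0; ring. Qed.

Lemma rr_opp x k : rr (- x) k = - rr x k.
Proof. by rewrite -scaleN1r rr_scale mulN1r. Qed.

Lemma rr_sub x z k : rr (x - z) k = rr x k - rr z k.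
Proof. by rewrite rr_add rr_opp. Qed.

Lemma rr_sum k (F : 'I_n -> 'rV[R]_n) :
  rr (\sum_(j < n) F j) k = \sum_(j < n) rr (F j) k.
Proof.
elim/big_rec2: _ => [|j s u _ <-]; first exact: rr_zero.
by rewrite rr_add.
Qed.

Lemma rr_lin x k : rr x k = \sum_(i < n) x 0 i * rr (delta_mx 0 i) k.
Proof.
rewrite {1}(row_sum_delta x) rr_sum; apply: eq_bigr => i _.
by rewrite rr_scale.
Qed.

Lemma q_ge0 x : 0 <= @q_fun R T t x.
Proof.
rewrite qE //; apply: mulr_ge0; first lra.
by apply: sumr_ge0 => k _; exact: sqr_ge0.
Qed.

Lemma sumv_ge x : 7/16 * \sum_(i < n) x 0 i ^+ 2 <=
  \sum_(i < n) v_fun (yvec R T t 0 i) (x 0 i).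
Proof.
rewrite mulr_sumr; apply: ler_sum => i _; apply: v_ge0; exact: yvec_gt0.
Qed.

Lemma g_ge0 x : 0 <= @g_fun R T t x.
Proof.
rewrite /g_fun; apply: addr_ge0; first exact: q_ge0.
apply: le_trans (sumv_ge x); apply: mulr_ge0; first lra.
by apply: sumr_ge0 => k _; exact: sqr_ge0.
Qed.

Lemma g_zero : @g_fun R T t 0 = 0.
Proof.
rewrite /g_fun qE // big1 ?mulr0 ?add0r => [|k _]; last by rewrite rr_zero expr0n.
apply: big1 => i _; rewrite [X in v_fun _ X]mxE; apply: v_0; exact: yvec_gt0.
Qed.

Lemma g_inf : inf (range (@g_fun R T t)) = 0.
Proof.
apply/eqP; rewrite eq_le; apply/andP; split.
  have hl : has_lbound (range (@g_fun R T t)).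
    by exists 0 => _ [x _ <-]; exact: g_ge0.
  by have := ge_inf hl; apply; exists 0 => //; rewrite g_zero.
apply: lb_le_inf; first by exists (@g_fun R T t 0); exists 0.
by move=> _ [x _ <-]; exact: g_ge0.
Qed.

Definition Rm : 'M[R]_n := \matrix_(i, k) rr (delta_mx 0 i : 'rV[R]_n) k.

Lemma Bmat_E : Bmat R T t = Rm *m Rm^T.
Proof.
apply/matrixP => i j; rewrite !mxE !qE // -!mulrBr -!sumrB mulr_sumr.
apply: eq_bigr => k _; rewrite !mxE !rr_add.
move: (rr _ k) (rr _ k) => a b; by field.
Qed.

Lemma xRm x : x *m Rm = \row_(k < n) rr x k.
Proof.
apply/rowP => k; rewrite !mxE rr_lin; apply: eq_bigr => i _; by rewrite mxE.
Qed.

Lemma quad_B x : (x *m Bmat R T t *m x^T) 0 0 = \sum_(k < n) rr x k ^+ 2.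
Proof.
rewrite Bmat_E !mulmxA -mulmxA -trmx_mul xRm !mxE; apply: eq_bigr => k _.
by rewrite !mxE expr2.
Qed.

Lemma quad_1 x : (x *m 1%:M *m x^T) 0 0 = \sum_(i < n) x 0 i ^+ 2.
Proof. by rewrite mulmx1 !mxE; apply: eq_bigr => i _; rewrite !mxE expr2. Qed.

Lemma g_upper x :
  @g_fun R T t x <= 1/2 * (x *m (Bmat R T t + 1%:M) *m x^T) 0 0.
Proof.
rewrite mulmxDr mulmxDl mxE quad_B quad_1 /g_fun qE // mulrDr lerD2l.
rewrite mulr_sumr; apply: ler_sum => i _.
have := @v_le R _ (x 0 i) (@yvec_gt0 R T t i); lra.
Qed.

End E.

Lemma shiftA (R : realType) (F : nat -> R) n : (forall k, 0 <= F k) ->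
  \sum_(i < n) (if (i.+1 < n)%N then F i.+1 else 0) <= \sum_(i < n) F i.
Proof.
move=> F0; case: n => [|n]; first by rewrite !big_ord0.
rewrite big_ord_recr /= ltnn addr0 big_ord_recl /=.
have -> : \sum_(i < n) (if (i.+1 < n.+1)%N then F i.+1 else 0) = \sum_(i < n) F i.+1.
  by apply: eq_bigr => i _; rewrite ltnS ltn_ord.
by rewrite lerDr.
Qed.

Lemma shiftB (R : realType) (F : nat -> R) n : (forall k, 0 <= F k) -> F 0%N = 0 ->
  \sum_(i < n) F i <= \sum_(i < n) F i.+1.
Proof.
move=> F0 F00; case: n => [|n]; first by rewrite !big_ord0.
rewrite big_ord_recl F00 add0r big_ord_recr /=.
by rewrite lerDl.
Qed.

Section F.
Variable R : realType.
Variables T t : nat.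
Hypothesis hT : (0 < T)%N.
Local Notation n := (T * t)%N.
Implicit Types x h z u : 'rV[R]_n.

Definition sqn d (u : 'rV[R]_d) := \sum_(i < d) u 0 i ^+ 2.

Lemma enormE d (u : 'rV[R]_d) : enorm u = Num.sqrt (sqn u).
Proof. by []. Qed.

Lemma sqn_ge0 d (u : 'rV[R]_d) : 0 <= sqn u.
Proof. by apply: sumr_ge0 => i _; exact: sqr_ge0. Qed.

Lemma rr_sq_bound u : \sum_(k < n) rr u k ^+ 2 <= 4 * sqn u.
Proof.
apply: (@le_trans _ _ (\sum_(k < n) (2 * pc u k.+1 ^+ 2 + 2 * pc u k ^+ 2))).
  apply: ler_sum => k _; rewrite /rr.
  have := alpha_ge R T k; have := alpha_le R T k; move=> a1 a2.
  have : (alpha R T k * pc u k) ^+ 2 <= pc u k ^+ 2.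
    rewrite exprMn; have := sqr_ge0 (pc u k); have: alpha R T k ^+ 2 <= 1 by nra.
    nra.
  have := sqr_ge0 (pc u k.+1 + alpha R T k * pc u k).
  move: (pc u k.+1) (alpha R T k * pc u k) (pc u k) => p q r; nra.
rewrite big_split /= -!mulr_sumr.
have e : \sum_(k < n) pc u k.+1 ^+ 2 = sqn u.
  by apply: eq_bigr => i _; rewrite pcS.
have : \sum_(k < n) pc u k ^+ 2 <= \sum_(k < n) pc u k.+1 ^+ 2.
  apply: (shiftB (F := fun k => pc u k ^+ 2)) => [k|]; first exact: sqr_ge0.
  by rewrite pc0 expr0n.
rewrite e; lra.
Qed.

Lemma Gq_sq u : sqn (Gq u) <= 16 * sqn u.
Proof.
apply: (@le_trans _ _ (\sum_(i < n) (2 * rr u i ^+ 2 +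
     2 * (if (i.+1 < n)%N then rr u i.+1 ^+ 2 else 0)))).
  apply: ler_sum => i _; rewrite mxE.
  case: ifP => _; last by rewrite subr0 mulr0 addr0 ler_peMl ?sqr_ge0 //; lra.
  have := alpha_ge R T i.+1; have := alpha_le R T i.+1; move=> a1 a2.
  have : (alpha R T i.+1 * rr u i.+1) ^+ 2 <= rr u i.+1 ^+ 2.
    rewrite exprMn; have := sqr_ge0 (rr u i.+1); have: alpha R T i.+1 ^+ 2 <= 1 by nra.
    nra.
  have := sqr_ge0 (rr u i + alpha R T i.+1 * rr u i.+1).
  move: (rr u i) (alpha R T i.+1 * rr u i.+1) (rr u i.+1) => p q r; nra.
rewrite big_split /= -!mulr_sumr.
have hs : \sum_(i < n) (if (i.+1 < n)%N then rr u i.+1 ^+ 2 else 0) <=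
          \sum_(i < n) rr u i ^+ 2.
  exact: (shiftA (F := fun k => rr u k ^+ 2) n (fun k => sqr_ge0 _)).
have := rr_sq_bound u.
lra.
Qed.

Lemma Gq_sub x z : Gq x - Gq z = Gq (x - z).
Proof.
apply/rowP => i; rewrite !mxE !rr_sub.
by case: ifP => _; ring.
Qed.

Lemma Gv_sq x z : sqn (Gv x - Gv z) <= 1089 * sqn (x - z).
Proof.
rewrite /sqn mulr_sumr; apply: ler_sum => i _.
have -> : (Gv x - Gv z) 0 i = dv (yvec R T t 0 i) (x 0 i) - dv (yvec R T t 0 i) (z 0 i).
  by rewrite !mxE.
have -> : (x - z) 0 i = x 0 i - z 0 i by rewrite !mxE.
have := dv_lip (x 0 i) (z 0 i) (@yvec_gt0 R T t i).
move: (dv (yvec R T t 0 i) (x 0 i)) (dv (yvec R T t 0 i) (z 0 i)) => a b.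
move: (x 0 i) (z 0 i) => c d h.
rewrite -(real_normK (num_real (a - b))) -(real_normK (num_real (c - d))).
have := normr_ge0 (a - b); have := normr_ge0 (c - d); nra.
Qed.

Lemma sqn_add_bound d (a b : 'rV[R]_d) : sqn (a + b) <= 37/4 * sqn a + 37/33 * sqn b.
Proof.
rewrite /sqn !mulr_sumr -big_split; apply: ler_sum => i _; rewrite mxE.
move: (a 0 i) (b 0 i) => p q.
rewrite -subr_ge0.
have -> : 37 / 4 * p ^+ 2 + 37 / 33 * q ^+ 2 - (p + q) ^+ 2 = (33 * p - 4 * q) ^+ 2 / 132.
  by field.
by apply: divr_ge0 => //; exact: sqr_ge0.
Qed.

Lemma g_smooth : L_smooth (@g_fun R T t) 37.
Proof.
split; first by move=> x; have [] := g_diff x hT.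
move=> x z; rewrite !grad_g // !enormE.
have e : G x - G z = Gq (x - z) + (Gv x - Gv z).
  by rewrite /G -Gq_sub; rewrite opprD addrACA.
rewrite e.
have h1 := sqn_add_bound (Gq (x - z)) (Gv x - Gv z).
have h2 := Gq_sq (x - z).
have h3 := Gv_sq x z.
have h4 : sqn (Gq (x - z) + (Gv x - Gv z)) <= 37 ^+ 2 * sqn (x - z) by lra.
apply: le_trans (_ : Num.sqrt (37 ^+ 2 * sqn (x - z)) <= _).
  by rewrite ler_sqrt // mulr_ge0 ?sqn_ge0 // sqr_ge0.
by rewrite sqrtrM ?sqr_ge0 // sqrtr_sqr ger0_norm.
Qed.

End F.

Section G.
Variable R : realType.
Variables T t : nat.
Hypothesis hT : (0 < T)%N.
Local Notation n := (T * t)%N.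
Local Notation y := (yvec R T t).
Implicit Types x h z u : 'rV[R]_n.

Definition fch x := @g_fun R T t (y - x).

Lemma linc_oppc d (c h : 'rV[R]_d) : linc (- c) h = linc c (- h).
Proof. by rewrite /linc; apply: eq_bigr => i _; rewrite !mxE mulrN mulNr. Qed.

Lemma fch_diff x : differentiable fch x /\ 'd fch x = linc (- G (y - x)) :> (_ -> _).
Proof.
apply: (quad_diff (K := 67 * n%:R)) => h.
rewrite /fch linc_oppc (_ : y - (x + h) = (y - x) + (- h)); last by rewrite opprD addrA.
by have := g_rem (y - x) (- h) hT; rewrite normrN.
Qed.

Lemma grad_fch x : grad fch x = - G (y - x).
Proof.
apply/rowP => i; rewrite mxE.
by have [_ ->] := fch_diff x; rewrite linc_delta.
Qed.

Lemma rr_y j : (0 < j)%N -> (j < n)%N -> rr y j = 0.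
Proof.
move=> j0 jn; rewrite /rr.
have jn' : (j.-1 < n)%N by apply: leq_ltn_trans jn; exact: leq_pred.
rewrite (pcS y (Ordinal jn)) -[in pc y j](prednK j0) (pcS y (Ordinal jn')) !mxE /=.
rewrite -{1}(prednK j0) divnS // /alpha /dvdn prednK //.
by case: ifP => _; rewrite ?add1n ?exprS ?add0n ?mul1r ?subrr.
Qed.

Lemma zc : zero_chain fch.
Proof.
split; first by move=> x; have [] := fch_diff x.
move=> x k hk hx i; rewrite grad_fch.
case: (ltnP i k.+1) => // hik; rewrite mxE oppr_eq0; suff -> : G (y - x) 0 i = 0 by rewrite eqxx.
have pcx p : (k <= p)%N -> pc x p.+1 = 0.
  move=> kp; case: (ltnP p n) => pn; last exact: pc_ge.
  rewrite (pcS x (Ordinal pn)); apply/eqP; apply: contraTT kp => /hx /= pk.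
  by rewrite -ltnNge.
have rrx j : (k < j)%N -> rr x j = 0.
  move=> kj; rewrite /rr pcx ?(ltnW kj) // -(prednK (leq_ltn_trans (leq0n k) kj)).
  by rewrite pcx ?mulr0 ?subr0 // -ltnS prednK // (leq_ltn_trans (leq0n k) kj).
have xi : x 0 i = 0 by rewrite -pcS pcx // ltnW.
rewrite !mxE !rr_sub rr_y ?rrx ?(leq_ltn_trans (leq0n k) hik) //.
rewrite subr0 sub0r.
case: ifP => hin.
- rewrite rr_y // subr0 mulr0 oppr0 add0r xi subr0 dv_yy //.
- by rewrite oppr0 add0r xi subr0 dv_yy.
- exact: ltn_trans hik _.
Qed.

End G.

Section H.
Variable R : realType.
Implicit Types (a b c p q r K Y : R).

Lemma hl_peak a b p q r : 7/8 <= a <= 1 -> 7/8 <= b <= 1 -> 0 < p -> q <= p -> r <= p ->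
  3/4 * p <= (1 + b ^+ 2) * p - a * q - b * r + p.
Proof.
move=> /andP[a1 a2] /andP[b1 b2] p0 qp rp.
have e1 : a * q <= a * p by rewrite ler_wpM2l //; lra.
have e2 : b * r <= b * p by rewrite ler_wpM2l //; lra.
have e3 : 0 <= (2 + b ^+ 2 - a - b - 3/4) * p.
  apply: mulr_ge0; last lra.
  have : 0 <= (b - 1/2) ^+ 2 by exact: sqr_ge0.
  rewrite !expr2; nra.
nra.
Qed.

Lemma hl_end a p q : 7/8 <= a <= 1 -> 0 < p -> q <= p ->
  3/4 * p <= p - a * q + p.
Proof.
move=> /andP[a1 a2] p0 qp.
have e1 : a * q <= a * p by rewrite ler_wpM2l //; lra.
nra.
Qed.

Lemma hl_scale a q p : 7/8 <= a <= 1 -> q <= p -> 0 < p -> a * q <= p.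
Proof.
move=> /andP[a1 a2] qp p0.
have e1 : a * q <= a * p by rewrite ler_wpM2l //; lra.
nra.
Qed.

Lemma hl_pre a p p' K : 7/8 <= a <= 1 -> 0 < p -> 0 < p' -> 0 <= K ->
  (1 + a ^+ 2) * p' - a * p < K -> a * p' <= K + 1/2 * p.
Proof.
move=> /andP[a1 a2] p0 p'0 K0 h.
have e1 : (1 + a ^+ 2) * (a * p') < a * (K + a * p).
  have : a * ((1 + a ^+ 2) * p') < a * (K + a * p).
    by rewrite ltr_pM2l; lra.
  by rewrite mulrCA.
have e2 : a * (K + a * p) <= (1 + a ^+ 2) * (K + 1/2 * p).
  rewrite -subr_ge0.
  have -> : (1 + a ^+ 2) * (K + 1 / 2 * p) - a * (K + a * p) =
            K * ((a - 1/2) ^+ 2 + 3/4) + p * (1 - a ^+ 2) / 2 by field.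
  apply: addr_ge0; first by apply: mulr_ge0 => //; have := sqr_ge0 (a - 1/2); lra.
  apply: divr_ge0 => //; apply: mulr_ge0; first lra.
  rewrite subr_ge0 expr2; nra.
have e3 : (1 + a ^+ 2) * (a * p') < (1 + a ^+ 2) * (K + 1/2 * p) by lra.
rewrite ltW //; move: e3; rewrite ltr_pM2l //.
by have := sqr_ge0 a; lra.
Qed.

Lemma hl_mid a Y p : 7/8 <= a <= 1 -> 0 < Y -> 31/32 * Y < p ->
  1/4 * Y <= (1/2 + a ^+ 2) * p - a * (33/32 * Y).
Proof.
move=> /andP[a1 a2] Y0 hp.
have e1 : (1/2 + a ^+ 2) * (31/32 * Y) <= (1/2 + a ^+ 2) * p.
  by rewrite ler_wpM2l ?ltW //; have := sqr_ge0 a; lra.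
have e2 : 0 <= (31/32 * a ^+ 2 - 33/32 * a + 15/64) * Y.
  apply: mulr_ge0; last lra.
  have : 0 <= (a - 7/8) * (1 - a) by apply: mulr_ge0; lra.
  rewrite expr2; nra.
have e3 : (1/2 + a ^+ 2) * (31/32 * Y) = (31/32 * a ^+ 2 + 31/64) * Y by field.
nra.
Qed.

End H.

Lemma argmax (R : realType) (f : nat -> R) l r : (l <= r)%N ->
  exists2 p, (l <= p <= r)%N & forall q, (l <= q <= r)%N -> f q <= f p.
Proof.
elim: r => [|r IH] hl.
  exists 0%N; first by rewrite hl.
  by move=> q /andP[_]; rewrite leqn0 => /eqP ->.
case: (ltnP r l) => hrl.
  have el : l = r.+1 by apply/eqP; rewrite eqn_leq hl hrl.
  exists r.+1; first by rewrite el leqnn.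
  by move=> q /andP[h1 h2]; have -> : q = r.+1 by apply/eqP; rewrite eqn_leq h2 -el h1.
have [p hp pmax] := IH hrl.
case: (lerP (f r.+1) (f p)) => hf.
  exists p; first by case/andP: hp => -> /= h; apply: leqW.
  move=> q /andP[h1 h2]; case: (ltnP r q) => hq.
    by have -> : q = r.+1 by apply/eqP; rewrite eqn_leq h2 hq.
  by apply: pmax; rewrite h1.
exists r.+1; first by rewrite leqnn andbT leqW.
move=> q /andP[h1 h2]; case: (ltnP r q) => hq.
  by have -> : q = r.+1 by apply/eqP; rewrite eqn_leq h2 hq.
by apply: le_trans (ltW hf); apply: pmax; rewrite h1.
Qed.

Section Core.
Variable R : realType.
Variables (n : nat) (P a Y Gf : nat -> R).
Hypotheses (P0 : P 0%N = 0) (Pn : P n.+1 = 0).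
Hypotheses (a_ge : forall p, 7/8 <= a p) (a_le : forall p, a p <= 1).
Hypotheses (Y0 : forall p, 0 < Y p) (Ymon : forall p q, (p <= q)%N -> Y q <= Y p).
Hypothesis hG : forall p, (0 < p <= n)%N ->
  Gf p = (1 + (if (p < n)%N then a p.+1 ^+ 2 else 0)) * P p - a p * P p.-1
         - a p.+1 * P p.+1 + dv (Y p) (P p).

Let p'n' p' (h1 : (1 <= p')%N) (h2 : (p' < n)%N) : (0 < p' <= n)%N.
Proof. by rewrite h1 ltnW. Qed.

Let aI p : 7/8 <= a p <= 1. Proof. by rewrite a_ge a_le. Qed.

Lemma core m : (0 < m <= n)%N -> inS (Y m) (P m) ->
  (forall p, (0 < p < m)%N -> ~~ inS (Y p) (P p)) ->
  exists2 p, (0 < p <= n)%N & Y m / 10 <= `|Gf p|.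
Proof.
move=> hm Sm hpre.
set K := Y m / 10.
case: (pselect (exists2 p, (0 < p <= n)%N & K <= `|Gf p|)) => // Hn; exfalso.
have H p : (0 < p <= n)%N -> Gf p < K.
  move=> hp; rewrite ltNge; apply/negP => hk; apply: Hn; exists p => //.
  exact: le_trans hk (ler_norm _).
have Ym0 := Y0 m.
have K0 : 0 <= K by rewrite /K; lra.
move: (Sm); rewrite /inS => /andP[Sm1 Sm2].
have Pm0 : 0 < P m by lra.
case/andP: hm => m0 mn.
have pre : a m * P m.-1 <= 4/3 * K + 1/2 * P m.
  case: (ltnP 1 m) => m1; last first.
    have -> : m.-1 = 0%N by rewrite -subn1; apply/eqP; rewrite subn_eq0.
    by rewrite P0 mulr0; lra.
  have m1' : (1 <= m.-1)%N by rewrite -ltnS prednK.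
  have [p' hp' pmax] := argmax P m1'.
  case/andP: hp' => p'1 p'm.
  have p'lt : (p' < m)%N by apply: leq_ltn_trans p'm _; rewrite prednK // ltnSn.
  have p'n : (p' < n)%N by apply: leq_trans p'lt _.
  have Pm1 : P m.-1 <= P p' by apply: pmax; rewrite m1' leqnn.
  case: (lerP (P p') 0) => hP'.
    have : a m * P m.-1 <= 0.
      by rewrite mulr_ge0_le0 //; [have := a_ge m; lra | lra].
    lra.
  have nS' : ~~ inS (Y p') (P p') by apply: hpre; rewrite (leq_trans _ p'1).
  have dv' := dv_notS (Y0 p') nS'.
  have Gp' := H p' (p'n' p'1 p'n).
  have eG := hG (p'n' p'1 p'n); rewrite p'n dv' in eG.
  have q1 : P p'.-1 <= P p'.
    case: (ltnP 1 p') => h1.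
      by apply: pmax; rewrite -ltnS prednK ?(leq_trans _ p'm) ?leq_pred ?(ltnW h1) // h1.
    have -> : p'.-1 = 0%N by rewrite -subn1; apply/eqP; rewrite subn_eq0.
    by rewrite P0 ltW.
  case: (ltnP p' m.-1) => hp'm.
    have q2 : P p'.+1 <= P p' by apply: pmax; rewrite hp'm andbT.
    have := hl_peak (aI p') (aI p'.+1) hP' q1 q2; rewrite -eG => hpk.
    have := hl_scale (aI m) Pm1 hP'; lra.
  have ep : p' = m.-1 by apply/eqP; rewrite eqn_leq p'm hp'm.
  have epm : p'.+1 = m by rewrite ep prednK // (ltn_trans _ m1).
  rewrite epm in eG.
  have := hl_scale (aI p') q1 hP' => hsc.
  have hK : (1 + a m ^+ 2) * P p' - a m * P m < K by lra.
  have := hl_pre (aI m) Pm0 hP' K0 hK.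
  rewrite ep; lra.
have [q hq qmax] := argmax P mn.
case/andP: hq => mq qn.
have hm' : (0 < m <= n)%N by rewrite m0 mn.
have eGm := hG hm'.
have Gm := H m hm'.
case: (boolP (inS (Y q) (P q))) => Sq.
  have bnd p : (m <= p <= n)%N -> P p <= 33/32 * Y m.
    move=> hp; have := qmax p hp; have := Ymon mq.
    by move: Sq; rewrite /inS => /andP[_ ?]; lra.
  have dvm := dv_S (Y0 m) Sm.
  case: (ltnP m n) => hmn.
    rewrite hmn in eGm.
    have b1 : P m.+1 <= 33/32 * Y m by apply: bnd; rewrite leqnSn hmn.
    have b2 : a m.+1 * P m.+1 <= a m.+1 * (33/32 * Y m).
      by rewrite ler_wpM2l //; have := a_ge m.+1; lra.
    have := hl_mid (aI m.+1) Ym0 Sm1.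
    rewrite /K in Gm pre K0; lra.
  have emn : m = n by apply/eqP; rewrite eqn_leq mn hmn.
  rewrite (_ : (m < n)%N = false) in eGm; last by rewrite emn ltnn.
  rewrite (_ : P m.+1 = 0) in eGm; last by rewrite emn.
  rewrite addr0 mul1r mulr0 subr0 in eGm.
  rewrite /K in Gm pre K0; lra.
have qm : (m < q)%N.
  rewrite ltn_neqAle mq andbT; apply/eqP => eq; move: Sq; rewrite -eq Sm //.
have Pq : P m <= P q by apply: qmax; rewrite leqnn mn.
have Pq0 : 0 < P q by lra.
have dvq := dv_notS (Y0 q) Sq.
have q0 : (0 < q)%N by apply: leq_ltn_trans qm.
have hq' : (0 < q <= n)%N by rewrite q0 qn.
have eGq := hG hq'; rewrite dvq in eGq.
have Gq := H q hq'.
have q1 : P q.-1 <= P q by apply: qmax; rewrite -ltnS prednK // qm (leq_trans (leq_pred q) qn).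
have hq : 3/4 * P q <= Gf q.
  case: (ltnP q n) => hqn.
    rewrite hqn in eGq.
    have q2 : P q.+1 <= P q by apply: qmax; rewrite hqn (ltnW (leq_ltn_trans mq _)) //.
    by rewrite eGq; exact: hl_peak.
  have eqn : q = n by apply/eqP; rewrite eqn_leq qn hqn.
  rewrite (_ : (q < n)%N = false) in eGq; last by rewrite eqn ltnn.
  rewrite (_ : P q.+1 = 0) in eGq; last by rewrite eqn.
  rewrite addr0 mul1r mulr0 subr0 in eGq.
  by rewrite eGq; exact: hl_end.
rewrite /K in Gq; lra.
Qed.
End Core.

Section K.
Variable R : realType.

Lemma sum_widen (F : nat -> R) A B : (forall k, 0 <= F k) ->
  \sum_(j < A) F j <= \sum_(j < A + B) F j.
Proof.
move=> F0; elim: B => [|B IH]; first by rewrite addn0.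
by rewrite addnS big_ord_recr /= ler_wpDr.
Qed.

Lemma sum_widen_le (F : nat -> R) A N : (forall k, 0 <= F k) -> (A <= N)%N ->
  \sum_(j < A) F j <= \sum_(j < N) F j.
Proof. by move=> F0 h; rewrite -(subnKC h); exact: sum_widen. Qed.

Lemma sum_tail (F : nat -> R) M N :
  \sum_(i < N) (if (M <= i)%N then F (i - M)%N else 0) = \sum_(j < N - M) F j.
Proof.
elim: N => [|N IH]; first by rewrite !big_ord0.
rewrite big_ord_recr /= IH; case: (leqP M N) => h.
  by rewrite subSn // big_ord_recr.
have e1 : (N - M = 0)%N by apply/eqP; rewrite subn_eq0 ltnW.
have e2 : (N.+1 - M = 0)%N by apply/eqP; rewrite subn_eq0.
by rewrite e1 e2 addr0.
Qed.

Lemma geom_sum (r : R) N : \sum_(i < N) r ^+ i * (1 - r) = 1 - r ^+ N.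
Proof.
elim: N => [|N IH]; first by rewrite big_ord0 expr0 subrr.
by rewrite big_ord_recr /= IH exprS; ring.
Qed.

Lemma geom_block (r : R) T N : (0 < T)%N -> 0 <= r -> r < 1 ->
  \sum_(j < N) r ^+ (j %/ T) <= T%:R / (1 - r).
Proof.
move=> hT r0 r1.
have F0 : forall k, 0 <= r ^+ (k %/ T) by move=> k; exact: exprn_ge0.
apply: le_trans (sum_widen_le (F := fun j => r ^+ (j %/ T)) F0 (_ : (N <= T * N)%N)) _.
  by rewrite leq_pmull.
rewrite (sum_blocks (fun j => r ^+ (j %/ T))).
have -> : \sum_(i < N) \sum_(j < T) r ^+ ((i * T + j) %/ T) = \sum_(i < N) (T%:R * r ^+ i).
  apply: eq_bigr => i _.
  rewrite (eq_bigr (fun _ => r ^+ i)) ?sumr_const ?card_ord ?mulr_natl //.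
  by move=> j _; rewrite divnMDl // divn_small // addn0.
rewrite -mulr_sumr ler_pdivlMr ?subr_gt0 // -mulrA.
rewrite mulr_suml geom_sum.
have : 0 <= r ^+ N by exact: exprn_ge0.
have : (0 : R) <= T%:R by [].
move=> a b; nra.
Qed.
End K.

Section J.
Variable R : realType.
Variables T t : nat.
Hypothesis hT : (0 < T)%N.
Local Notation n := (T * t)%N.
Implicit Types x : 'rV[R]_n.

Definition aa (p : nat) : R := alpha R T p.-1.
Definition YY (p : nat) : R := (7/8 : R) ^+ (p.-1 %/ T).

Lemma YY_gt0 p : 0 < YY p. Proof. by rewrite /YY exprn_gt0. Qed.

Lemma YY_mon p q : (p <= q)%N -> YY q <= YY p.
Proof.
move=> h; rewrite /YY; apply: ler_wiXn2l; [lra|lra|].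
by apply: leq_div2r; rewrite -!subn1 leq_sub2r.
Qed.

Lemma hG_inst x p : (0 < p <= n)%N ->
  pc (G x) p = (1 + (if (p < n)%N then aa p.+1 ^+ 2 else 0)) * pc x p - aa p * pc x p.-1
         - aa p.+1 * pc x p.+1 + dv (YY p) (pc x p).
Proof.
case: p => [//|i] /andP[_ hi].
rewrite (pcS (G x) (Ordinal hi)) /G !mxE -(pcS x (Ordinal hi)).
rewrite /aa /YY /rr !succnK.
case: ifP => h; first by ring.
rewrite (pc_ge x (_ : n <= i.+1)%N); last by rewrite leqNgt h.
by ring.
Qed.


Lemma sqn_term x (p : nat) : (0 < p <= n)%N -> pc (G x) p ^+ 2 <= sqn (G x).
Proof.
case: p => [//|i] /andP[_ hi]; rewrite (pcS (G x) (Ordinal hi)) /sqn.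
rewrite (bigD1 (Ordinal hi)) //= lerDl; apply: sumr_ge0 => j _; exact: sqr_ge0.
Qed.

Lemma linc_self x : linc (G x) x =
  \sum_(k < n) rr x k ^+ 2 + \sum_(i < n) dv (yvec R T t 0 i) (x 0 i) * x 0 i.
Proof.
rewrite /G linc_addc linc_Gq; congr (_ + _).
by rewrite /linc; apply: eq_bigr => i _; rewrite mxE.
Qed.

Definition BB x : R :=
  \sum_(i < n) (if inS (yvec R T t 0 i) (x 0 i) then yvec R T t 0 i ^+ 2 else 0).

Lemma g_first x : @g_fun R T t x <= 4/7 * sqn (G x) + 2 * BB x.
Proof.
have st2 : @g_fun R T t x <= 1/2 * linc (G x) x + BB x.
  rewrite /g_fun qE // linc_self mulrDr -addrA lerD2l.
  rewrite /BB mulr_sumr -big_split; apply: ler_sum => i _ /=.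
  apply: le_trans (@v_PLbound R _ (x 0 i) (@yvec_gt0 R T t i)) _.
  rewrite lerD2r; move: (x 0 i) (dv _ _) => p q; lra.
have st3 : linc (G x) x <= 4/7 * sqn (G x) + 7/16 * sqn x.
  rewrite /linc /sqn !mulr_sumr -big_split; apply: ler_sum => i _ /=.
  move: (G x 0 i) (x 0 i) => p q.
  rewrite -subr_ge0.
  have -> : 4 / 7 * p ^+ 2 + 7 / 16 * q ^+ 2 - p * q = (8 * p - 7 * q) ^+ 2 / 112.
    by field.
  by apply: divr_ge0 => //; exact: sqr_ge0.
have st4 : 7/16 * sqn x <= @g_fun R T t x.
  rewrite /g_fun; have := sumv_ge x; have := q_ge0 hT x; rewrite /sqn; lra.
lra.
Qed.


Lemma YY_yvec (i : 'I_n) : yvec R T t 0 i = YY i.+1.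
Proof. by rewrite mxE /YY succnK. Qed.

Lemma BB_bound x : (exists i : 'I_n, inS (yvec R T t 0 i) (x 0 i)) ->
  exists m, [/\ (0 < m <= n)%N, inS (YY m) (pc x m),
    (forall p, (0 < p < m)%N -> ~~ inS (YY p) (pc x p)) &
    BB x <= YY m ^+ 2 * (64/15 * T%:R)].
Proof.
move=> [i0 hi0].
pose Sp := fun p => ((0 < p <= n)%N && inS (YY p) (pc x p)).
have ex : exists p, Sp p.
  by exists i0.+1; rewrite /Sp ltn_ord pcS -YY_yvec hi0.
case: (ex_minnP ex) => m /andP[hm Sm] mmin.
have mn : (m <= n)%N by case/andP: hm.
exists m; split => //.
  move=> p /andP[p0 pm]; apply/negP => Sp'.
  have : (m <= p)%N by apply: mmin; rewrite /Sp p0 Sp' (leq_trans (ltnW pm) mn).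
  by rewrite leqNgt pm.
set M := m.-1.
set r : R := (7/8) ^+ 2.
have r0 : 0 <= r by rewrite /r sqr_ge0.
have r1 : r <= 1 by rewrite /r; lra.
have r1' : r < 1 by rewrite /r; lra.
apply: (@le_trans _ _ (\sum_(i < n) (if (M <= i)%N then r ^+ (M %/ T) * r ^+ ((i - M) %/ T) else 0))).
  apply: ler_sum => i _.
  case: ifP => hS; last first.
    by case: ifP => _ //; apply: mulr_ge0; exact: exprn_ge0.
  have hMi : (M <= i)%N.
    have : (m <= i.+1)%N by apply: mmin; rewrite /Sp ltn_ord pcS -YY_yvec hS.
    by rewrite /M -ltnS; case: (m) => //= m' ; rewrite ltnS.
  rewrite hMi mxE -exprAC -/r -exprD.
  apply: ler_wiXn2l => //.
  by rewrite -[X in (_ <= X %/ T)%N](subnKC hMi) divnD // leq_addr.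
have e : \sum_(i < n) (if (M <= i)%N then r ^+ (M %/ T) * r ^+ ((i - M) %/ T) else 0)
  = r ^+ (M %/ T) * \sum_(i < n) (if (M <= i)%N then r ^+ ((i - M) %/ T) else 0).
  by rewrite mulr_sumr; apply: eq_bigr => i _; case: ifP; rewrite ?mulr0.
rewrite e (sum_tail (fun j => r ^+ (j %/ T)) M n).
apply: le_trans (ler_wpM2l (exprn_ge0 _ r0) (geom_block (n - M) hT r0 r1')) _.
have -> : T%:R / (1 - r) = 64/15 * T%:R :> R by rewrite /r expr2; field.
by rewrite /YY -exprAC.
Qed.



Lemma g_PL_bound x : @g_fun R T t x <= 854 * T%:R * sqn (G x).
Proof.
have g1 := g_first x.
have E0 : 0 <= sqn (G x) by exact: sqn_ge0.
have T1 : 1 <= T%:R :> R by rewrite ler1n.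
case: (pselect (exists i : 'I_n, inS (yvec R T t 0 i) (x 0 i))) => hS.
  have [m [hm Sm pre Bb]] := BB_bound hS.
  have [p hp hGp] := core (pc0 x) (pc_ge x (leqnn n)) (fun p => alpha_ge R T p.-1)
    (fun p => alpha_le R T p.-1) YY_gt0 YY_mon (hG_inst x) hm Sm pre.
  have hY := YY_gt0 m.
  have hsq : (YY m / 10) ^+ 2 <= sqn (G x).
    apply: le_trans (sqn_term x hp).
    rewrite -(real_normK (num_real (pc (G x) p))).
    have : 0 <= YY m / 10 by apply: divr_ge0; [exact: ltW|].
    move: hGp; move: (`|pc (G x) p|) => u h1 h2; nra.
  have hB : BB x <= 100 * sqn (G x) * (64 / 15 * T%:R).
    apply: le_trans Bb _; apply: ler_wpM2r; first by apply: mulr_ge0; [lra|exact: ler0n].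
    move: hsq; rewrite expr_div_n; lra.
  have e1 : 100 * sqn (G x) * (64 / 15 * T%:R) = 6400/15 * (T%:R * sqn (G x)) by field.
  have e2 : sqn (G x) <= T%:R * sqn (G x) by rewrite ler_peMl.
  rewrite e1 in hB; rewrite -mulrA; lra.
have B0 : BB x = 0.
  apply: big1 => i _; case: ifP => // h; exfalso; apply: hS; by exists i.
have e2 : sqn (G x) <= T%:R * sqn (G x) by rewrite ler_peMl.
rewrite B0 in g1; rewrite -mulrA; lra.
Qed.

Lemma g_PL : PL (@g_fun R T t) (1 / (2000 * T%:R)).
Proof.
split; first by move=> x; have [] := g_diff x hT.
move=> x; rewrite grad_g // g_inf // subr0 enormE sqr_sqrtr ?sqn_ge0 //.
have := g_PL_bound x; have := g_ge0 hT x; have := sqn_ge0 (G x).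
have T1 : 1 <= T%:R :> R by rewrite ler1n.
have -> : 2 * (1 / (2000 * T%:R)) * @g_fun R T t x = (@g_fun R T t x / T%:R) / 1000.
  by field; rewrite pnatr_eq0 -lt0n.
move=> h0 h1 h2.
have : @g_fun R T t x / T%:R <= 854 * sqn (G x).
  rewrite ler_pdivrMr; last by lra.
  by rewrite mulrAC.
lra.
Qed.


End J.

Unset Implicit Arguments. Set Strict Implicit.

Theorem lemma1 (R : realType) :
  (forall T t : nat, (1 <= T)%N -> (1 <= t)%N ->
     zero_chain (fun x : 'rV[R]_(T * t) => g_fun (yvec R T t - x))
     /\ (forall x : 'rV[R]_(T * t), g_fun (0 : 'rV[R]_(T * t)) <= g_fun x)
     /\ inf (range (@g_fun R T t)) = 0
     /\ (forall x : 'rV[R]_(T * t),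
           g_fun x <= 1/2 * (x *m (Bmat R T t + 1%:M) *m x^T) 0 0)
     /\ L_smooth (@g_fun R T t) 37)
  /\
  (exists C3 : R, 0 < C3 /\
     forall T t : nat, (1 <= T)%N -> (1 <= t)%N ->
       PL (@g_fun R T t) (1 / (C3 * T%:R))).
Proof.
split.
  move=> T t hT ht; split; first exact: (@zc R T t hT).
  split; first by move=> x; rewrite g_zero //; exact: g_ge0.
  split; first exact: g_inf.
  split; first exact: g_upper.
  exact: g_smooth.
exists 2000; split; first lra.
by move=> T t hT _; exact: g_PL.
Qed.
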